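(* For all $n\ge1$, $$q_n=\frac12nH_n-\frac12P_n,\qquad r_n=\frac12nP_n-\frac12P_n=\frac{n-1}{2}P_n.$$
   Context: Let $s=\sqrt3/2$. Consider the standard triangular lattice in the plane whose vertices are the points $(a+b/2,\,bs)$ with $a,b\in\mathbb Z$ and whose edges are the unit segments joining lattice points in the directions $0^\circ,60^\circ,120^\circ$; it divides the plane into unit equilateral triangles called cells. A small tile is a single cell; a large tile is an equilateral triangle of side $2$ whose vertices are lattice points (so it is a union of $4$ cells; it may point up or down). For a region $R$ that is a finite union of cells, a tiling of $R$ is a finite set of small and large tiles, each contained in $R$, with pairwise disjoint interiors and union equal to $R$. For $n\ge1$, the region $H_n$ is the union of the trapezoid with vertices $(0,0),(n,0),(n-\tfrac12,s),(\tfrac12,s)$ and the trapezoid with vertices $(\tfrac12,s),(n-\tfrac12,s),(n,2s),(0,2s)$ ($4n-2$ cells; for $n=1$ two unit triangles meeting at a point), and $P_n$ is $H_n$ with the cell with vertices $(n-1,0),(n,0),(n-\tfrac12,s)$ removed. $H_n$ and $P_n$ also denote the numbers of tilings of these regions; thus $H_n=\frac{(1+\sqrt2)^n+(1-\sqrt2)^n}{2}$ and $P_n=\frac{(1+\sqrt2)^n-(1-\sqrt2)^n}{2\sqrt2}$. Define $q_n$ (resp. $r_n$) as the sum, over all tilings of $H_n$ (resp. $P_n$), of the number of large tiles in the tiling. *)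

(* Defs.v *)
From HB Require Import structures.
From mathcomp Require Import all_boot all_order all_algebra.
From mathcomp Require Import finmap.
Set Implicit Arguments. Unset Strict Implicit. Unset Printing Implicit Defensive.
Import Order.TTheory GRing.Theory Num.Theory.
Local Open Scope ring_scope.
Local Open Scope fset_scope.

(* Lattice coordinates: the lattice point (a,b) : int * int is the point
   (a + b/2, b*sqrt(3)/2) of the plane.
   Cells: (a, b, true)  = the up-pointing unit triangle with vertices
                          (a,b), (a+1,b), (a,b+1);
          (a, b, false) = the down-pointing unit triangle with vertices
                          (a+1,b), (a,b+1), (a+1,b+1).
   Every cell of the triangular lattice is exactly one of these. *)
Definition cell := (int * int * bool)%type.

(* Tiles: (false, c)       = the small tile consisting of the cell c
                              (the orientation bit of the anchor is used);
          (true, (a,b,true))  = the large up-pointing triangle with vertices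
                              (a,b), (a+2,b), (a,b+2);
          (true, (a,b,false)) = the large down-pointing triangle with vertices
                              (a+2,b), (a,b+2), (a+2,b+2).
   Every side-2 lattice triangle (up or down) is exactly one of these. *)
Definition tile := (bool * cell)%type.

Definition is_large (t : tile) : bool := t.1.

Definition tile_cells (t : tile) : {fset cell} :=
  match t with
  | (false, c) => [fset c]
  | (true, (a, b, true)) =>
      [fset (a, b, true); ((a + 1)%R, b, true); (a, (b + 1)%R, true); (a, b, false)]
  | (true, (a, b, false)) =>
      [fset ((a + 1)%R, b, false); (a, (b + 1)%R, false); ((a + 1)%R, (b + 1)%R, false);
            ((a + 1)%R, (b + 1)%R, true)]
  end.

Definition is_tiling (R : {fset cell}) (T : {fset tile}) : bool :=
  [&& all (fun t => tile_cells t `<=` R) T,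
      all (fun t1 => all (fun t2 => (t1 != t2) ==> [disjoint tile_cells t1 & tile_cells t2]%fset) T) T
    & \bigcup_(t <- T) tile_cells t == R].

(* A finite set of tiles containing every tile that meets R: any tile
   meeting a cell (a,b,_) is either that small tile or a large tile anchored
   at (a+i, b+j) with i, j in {-1, 0}. *)
Definition cand_tiles (R : {fset cell}) : {fset tile} :=
  \bigcup_(c <- R)
    ([fset (false, c)] `|`
     [fset (true, ((c.1.1 - i%:Z)%R, (c.1.2 - j%:Z)%R, true))
        | i in iota 0 2, j in iota 0 2] `|`
     [fset (true, ((c.1.1 - i%:Z)%R, (c.1.2 - j%:Z)%R, false))
        | i in iota 0 2, j in iota 0 2]).

(* All tilings of R (every tiling uses only tiles meeting R, hence only
   candidate tiles, so this is the set of all tilings of R). *)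
Definition tilings (R : {fset cell}) : {fset {fset tile}} :=
  [fset T in fpowerset (cand_tiles R) | is_tiling R T].

Definition num_tilings (R : {fset cell}) : nat := #|` tilings R|.

Definition num_large_total (R : {fset cell}) : nat :=
  \sum_(T <- tilings R) #|` [fset t in T | is_large t]|.

(* Bottom row (between heights 0 and s):
   up cells (i,0) for 0 <= i <= n-1, down cells (i,0) for 0 <= i <= n-2.
   Top row (between heights s and 2s): down cells (c,1) for -1 <= c <= n-2,
   up cells (c,1) for 0 <= c <= n-2. *)
Definition H_region (n : nat) : {fset cell} :=
  [fset ((i%:Z : int), (0 : int), true) | i in iota 0 n] `|`
  [fset ((i%:Z : int), (0 : int), false) | i in iota 0 n.-1] `|`
  [fset (((i%:Z - 1)%R : int), (1 : int), false) | i in iota 0 n] `|`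
  [fset ((i%:Z : int), (1 : int), true) | i in iota 0 n.-1].

(* P_n: H_n minus the cell with vertices (n-1,0), (n,0), (n-1/2,s),
   i.e. the up cell (n-1, 0). *)
Definition P_region (n : nat) : {fset cell} :=
  H_region n `\ (((n%:Z - 1)%R : int), (0 : int), true).

Definition Hn (n : nat) : nat := num_tilings (H_region n).
Definition Pn (n : nat) : nat := num_tilings (P_region n).
Definition qn (n : nat) : nat := num_large_total (H_region n).
Definition rn (n : nat) : nat := num_large_total (P_region n).

(* Main.v *)
Require Import Defs.
From HB Require Import structures.
From mathcomp Require Import all_boot all_order all_algebra.
From mathcomp Require Import finmap.
From mathcomp Require Import zify lra.
Import Order.TTheory GRing.Theory Num.Theory.

Module PA.

Definition st := (bool * bool)%type.
Definition okst (x y : st) : bool :=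
  ~~ (y.1 && y.2) && ~~ (x.1 && y.1) && ~~ (x.2 && y.2).
Definition allst : seq st := [:: (false,false); (true,false); (false,true); (true,true)].
Definition nexts (x : st) : seq st := filter (okst x) allst.
Definition d0 : st := (false,false).
Fixpoint vcodes (k : nat) : seq (seq st) :=
  if k is k'.+1 then [seq rcons s x | s <- vcodes k', x <- nexts (last d0 s)]
  else [:: [::]].

Lemma mem_vcodes k s : (s \in vcodes k) = (size s == k) && path okst d0 s.
Proof.
elim: k s => [|k IH] s.
  by case: s => [|x s] //=.
apply/allpairsPdep/idP.
  move=> [s' [x [Hs' Hx ->]]].
  rewrite IH in Hs'; case/andP: Hs' => /eqP <- Hp.
  rewrite size_rcons eqxx /= rcons_path Hp /=.
  by move: Hx; rewrite mem_filter => /andP[Hx _].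
case/lastP: s => [|s x]; first by [].
rewrite size_rcons eqSS rcons_path; case/andP => Hs /andP[Hp Hx].
exists s, x; split => //; first by rewrite IH Hs Hp.
by rewrite mem_filter Hx /=; case: x {Hx} => [[] []].
Qed.

Lemma uniq_vcodes k : uniq (vcodes k).
Proof.
elim: k => [|k IH] //=.
apply: allpairs_uniq_dep => //.
  by move=> s _; apply: filter_uniq.
move=> [s1 x1] [s2 x2] _ _ /= E.
have := E; move/(congr1 (fun s => last d0 s)); rewrite !last_rcons => ex; subst x2.
by move/rcons_inj: E => [->].
Qed.

Definition ntrue (s : seq st) : nat := \sum_(x <- s) (x.1 + x.2).

Lemma ntrue_rcons s x : ntrue (rcons s x) = ntrue s + (x.1 + x.2).
Proof. by rewrite /ntrue -cats1 big_cat big_seq1. Qed.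

Lemma sum_next k (h : st -> nat -> nat) :
  \sum_(s <- vcodes k.+1) h (last d0 s) (ntrue s) =
  \sum_(s <- vcodes k) \sum_(x <- nexts (last d0 s)) h x (ntrue s + (x.1 + x.2)).
Proof.
rewrite /= big_allpairs_dep; apply: eq_bigr => s _; apply: eq_bigr => x _.
by rewrite last_rcons ntrue_rcons.
Qed.

Definition ca k (y : st) : nat := \sum_(s <- vcodes k) (last d0 s == y).
Definition cA k (y : st) : nat := \sum_(s <- vcodes k) (last d0 s == y) * ntrue s.

Definition s00 : st := (false,false).
Definition s10 : st := (true,false).
Definition s01 : st := (false,true).
Definition s11 : st := (true,true).

Lemma ca_step k y : ca k.+1 y =
  \sum_(s <- vcodes k) \sum_(x <- nexts (last d0 s)) (x == y).
Proof. by rewrite /ca (sum_next k (fun l _ => (l == y) : nat)). Qed.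

Lemma cA_step k y : cA k.+1 y =
  \sum_(s <- vcodes k) \sum_(x <- nexts (last d0 s)) (x == y) * (ntrue s + (x.1 + x.2)).
Proof. by rewrite /cA (sum_next k (fun l m => (l == y) * m)). Qed.

Lemma rec_a00 k : ca k.+1 s00 = ca k s00 + ca k s10 + ca k s01 + ca k s11.
Proof.
rewrite ca_step /ca -!big_split /=; apply: eq_bigr => s _.
by case: (last d0 s) => [[] []]; rewrite /nexts /= ?big_cons ?big_nil.
Qed.
Lemma rec_a10 k : ca k.+1 s10 = ca k s00 + ca k s01.
Proof.
rewrite ca_step /ca -!big_split /=; apply: eq_bigr => s _.
by case: (last d0 s) => [[] []]; rewrite /nexts /= ?big_cons ?big_nil.
Qed.
Lemma rec_a01 k : ca k.+1 s01 = ca k s00 + ca k s10.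
Proof.
rewrite ca_step /ca -!big_split /=; apply: eq_bigr => s _.
by case: (last d0 s) => [[] []]; rewrite /nexts /= ?big_cons ?big_nil.
Qed.
Lemma rec_a11 k : ca k.+1 s11 = 0.
Proof.
rewrite ca_step big1 // => s _.
by case: (last d0 s) => [[] []]; rewrite /nexts /= ?big_cons ?big_nil.
Qed.
Lemma rec_A00 k : cA k.+1 s00 = cA k s00 + cA k s10 + cA k s01 + cA k s11.
Proof.
rewrite cA_step /cA -!big_split /=; apply: eq_bigr => s _.
by case: (last d0 s) => [[] []]; rewrite /nexts /= ?big_cons ?big_nil /=; lia.
Qed.
Lemma rec_A10 k : cA k.+1 s10 = cA k s00 + ca k s00 + cA k s01 + ca k s01.
Proof.
rewrite cA_step /cA /ca -!big_split /=; apply: eq_bigr => s _.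
by case: (last d0 s) => [[] []]; rewrite /nexts /= ?big_cons ?big_nil /=; lia.
Qed.
Lemma rec_A01 k : cA k.+1 s01 = cA k s00 + ca k s00 + cA k s10 + ca k s10.
Proof.
rewrite cA_step /cA /ca -!big_split /=; apply: eq_bigr => s _.
by case: (last d0 s) => [[] []]; rewrite /nexts /= ?big_cons ?big_nil /=; lia.
Qed.
Lemma rec_A11 k : cA k.+1 s11 = 0.
Proof.
rewrite cA_step big1 // => s _.
by case: (last d0 s) => [[] []]; rewrite /nexts /= ?big_cons ?big_nil /=; lia.
Qed.

Lemma inv_all k :
  ca k s11 = 0 /\ cA k s11 = 0 /\ ca k s10 = ca k s01 /\ cA k s10 = cA k s01 /\
      2 * (cA k s00 + cA k s10 + cA k s01 + cA k s11) + (ca k s00 + ca k s01)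
        = k.+1 * (ca k s00 + ca k s10 + ca k s01 + ca k s11)
    /\ 2 * (cA k s00 + cA k s01) = k * (ca k s00 + ca k s01).
Proof.
elim: k => [|k [h1 [h2 [h3 [h4 [h5 h6]]]]]].
  by rewrite /ca /cA /= !big_cons !big_nil /ntrue big_nil.
rewrite rec_a00 rec_a10 rec_a01 rec_a11 rec_A00 rec_A10 rec_A01 rec_A11.
rewrite h1 h2 h3 h4 in h5 h6 *.
split; first by []. split; first by []. split; first by lia. split; first by lia. split; nia.
Qed.

Definition plast (s : seq st) : bool := ~~ (last d0 s).1.

Lemma count_identities k :
  2 * (\sum_(s <- vcodes k) ntrue s) + size (filter plast (vcodes k))
    = k.+1 * size (vcodes k) /\
  2 * (\sum_(s <- filter plast (vcodes k)) ntrue s) = k * size (filter plast (vcodes k)).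
Proof.
have [h1 [h2 [h3 [h4 [h5 h6]]]]] := inv_all k.
have E1 : size (vcodes k) = ca k s00 + ca k s10 + ca k s01 + ca k s11.
  rewrite -sum1_size /ca -!big_split /=; apply: eq_bigr => s _.
  by case: (last d0 s) => [[] []].
have E2 : size (filter plast (vcodes k)) = ca k s00 + ca k s01.
  rewrite -sum1_size big_filter big_mkcond /ca -!big_split /=; apply: eq_bigr => s _.
  by rewrite /plast; case: (last d0 s) => [[] []].
have E3 : \sum_(s <- vcodes k) ntrue s = cA k s00 + cA k s10 + cA k s01 + cA k s11.
  rewrite /cA -!big_split /=; apply: eq_bigr => s _.
  by case: (last d0 s) => [[] []] /=; lia.
have E4 : \sum_(s <- filter plast (vcodes k)) ntrue s = cA k s00 + cA k s01.
  rewrite big_filter big_mkcond /cA -!big_split /=; apply: eq_bigr => s _.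
  by rewrite /plast; case: (last d0 s) => [[] []] /=; lia.
rewrite E1 E2 E3 E4; split; lia.
Qed.

End PA.
Import PA.

Module PB.
Local Open Scope ring_scope.
Local Open Scope fset_scope.
Set Implicit Arguments. Unset Strict Implicit. Unset Printing Implicit Defensive.

Definition covered (L : seq tile) (c : cell) : bool := has (fun t => c \in tile_cells t) L.

Definition fill (R : {fset cell}) (L : seq tile) : {fset tile} :=
  [fset t | t in L] `|` [fset (false, c) | c in [fset c in R | ~~ covered L c]].

Lemma mem_fill R L (b : bool) (c : cell) :
  ((b, c) \in fill R L) = ((b, c) \in L) || (~~ b && (c \in R) && ~~ covered L c).
Proof.
rewrite /fill inE in_fset /=; congr (_ || _).
case: b => /=.
  by apply/imfsetP => -[c' _ [E]].
rewrite mem_imfset; last by move=> x y [].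
by rewrite /= !inE.
Qed.

Lemma tilingP R T : is_tiling R T ->
  [/\ (forall t, t \in T -> tile_cells t `<=` R),
      (forall t1 t2, t1 \in T -> t2 \in T -> t1 != t2 ->
          [disjoint tile_cells t1 & tile_cells t2])
    & (forall c, c \in R -> exists2 t, t \in T & c \in tile_cells t)].
Proof.
case/and3P => /allP H1 /allP H2 /eqP H3; split => //.
  by move=> t1 t2 h1 h2 ne; move/allP: (H2 t1 h1) => /(_ t2 h2); rewrite ne.
move=> c; rewrite -H3 => /bigfcupP [t /andP[tT _] ct]; by exists t.
Qed.

Lemma share_false R T t1 t2 c : is_tiling R T -> t1 \in T -> t2 \in T -> t1 != t2 ->
  c \in tile_cells t1 -> c \in tile_cells t2 -> False.
Proof.
case/tilingP => _ H _ h1 h2 ne c1 c2.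
by move/fdisjointP: (H t1 t2 h1 h2 ne) => /(_ c c1); rewrite c2.
Qed.

Lemma fill_eq R T L : is_tiling R T ->
  (forall t, (t \in L) = (t \in T) && t.1) -> T = fill R L.
Proof.
move=> HT HL; have [H1 H2 H3] := tilingP HT.
apply/fsetP => -[b c]; rewrite mem_fill HL /=.
case: b => /=; first by rewrite andbT orbF.
rewrite andbF /=; apply/idP/idP.
  move=> tT; have cR : c \in R by apply: (fsubsetP (H1 _ tT)); rewrite /= inE.
  rewrite cR /=; apply/hasPn => t; rewrite HL => /andP[tT' lt].
  apply/negP => ct; apply: (share_false HT tT tT' _ _ ct).
    by apply/eqP => E; move: lt; rewrite -E.
  by rewrite /= inE.
case/andP => cR /hasPn nc; have [t tT ct] := H3 c cR.
move: (nc t); rewrite HL tT /=; case: t tT ct => [[] c'] //= tT.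
  by move=> ct /(_ isT); rewrite ct.
by rewrite inE => /eqP ->.
Qed.

Lemma fill_tiling (R : {fset cell}) (L : seq tile) :
  (forall t : tile, t \in L -> t.1) ->
  (forall t, t \in L -> tile_cells t `<=` R) ->
  (forall t1 t2, t1 \in L -> t2 \in L -> t1 != t2 ->
     [disjoint tile_cells t1 & tile_cells t2]) ->
  is_tiling R (fill R L).
Proof.
move=> HL1 HL2 HL3.
have memF : forall t, t \in fill R L ->
    (t \in L) \/ exists2 c, t = (false, c) & (c \in R) && ~~ covered L c.
  move=> [b c]; rewrite mem_fill; case/orP; first by left.
  by case: b => //= /andP[cR nc]; right; exists c => //; rewrite cR.
apply/and3P; split.
- apply/allP => t /memF [tL|[c -> /andP[cR _]]]; first exact: HL2.
  by apply/fsubsetP => c'; rewrite /= inE => /eqP ->.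
- apply/allP => t1 /memF H1; apply/allP => t2 /memF H2; apply/implyP => ne.
  case: H1 => [t1L|[c1 E1 /andP[c1R nc1]]];
  case: H2 => [t2L|[c2 E2 /andP[c2R nc2]]].
  + exact: HL3.
  + subst t2; apply/fdisjointP => c ct1; rewrite /= inE; apply/eqP => E; subst c.
    by move/hasPn: nc2 => /(_ t1 t1L); rewrite ct1.
  + subst t1; apply/fdisjointP => c; rewrite /= inE => /eqP ->.
    by move/hasPn: nc1 => /(_ t2 t2L).
  + subst t1 t2; apply/fdisjointP => c; rewrite /= !inE => /eqP ->.
    by apply: contra ne => /eqP ->.
- rewrite eqEfsubset; apply/andP; split.
    apply/bigfcupsP => t /memF [tL|[c -> /andP[cR _]]] _; first exact: HL2.
    by apply/fsubsetP => c'; rewrite /= inE => /eqP ->.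
  apply/fsubsetP => c cR; apply/bigfcupP.
  case: (boolP (covered L c)) => [/hasP [t tL ct]|nc].
    exists t => //; rewrite andbT /fill inE; apply/orP; left.
    by rewrite in_fset.
  exists (false, c); last by rewrite /= inE.
  by rewrite andbT mem_fill /= cR nc orbT.
Qed.

Lemma cand_sub (R : {fset cell}) (t : tile) : tile_cells t `<=` R -> t \in cand_tiles R.
Proof.
move/fsubsetP => H.
case: t H => [[] [[a b] []]] H.
- have cR : (a, b, true) \in R by apply: H; rewrite /= !inE eqxx.
  apply/bigfcupP; exists (a, b, true); first by rewrite cR.
  rewrite !inE; apply/orP; left; apply/orP; right.
  apply/imfset2P; exists 0%N; first by rewrite /= inE.
  exists 0%N; first by rewrite /= inE.
  by rewrite /= !subr0.
- have cR : ((a + 1)%R, (b + 1)%R, false) \in R by apply: H; rewrite /= !inE eqxx ?orbT.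
  apply/bigfcupP; exists ((a + 1)%R, (b + 1)%R, false); first by rewrite cR.
  rewrite !inE; apply/orP; right.
  apply/imfset2P; exists 1%N; first by rewrite /= !inE.
  exists 1%N; first by rewrite /= !inE.
  by rewrite /= !addrK.
- have cR : (a, b, true) \in R by apply: H; rewrite /= !inE.
  apply/bigfcupP; exists (a, b, true); first by rewrite cR.
  by rewrite !inE eqxx.
- have cR : (a, b, false) \in R by apply: H; rewrite /= !inE.
  apply/bigfcupP; exists (a, b, false); first by rewrite cR.
  by rewrite !inE eqxx.
Qed.

Lemma mem_tilings (R : {fset cell}) (T : {fset tile}) : (T \in tilings R) = is_tiling R T.
Proof.
rewrite /tilings !inE fpowersetE /=; case HT: (is_tiling R T); last by rewrite andbF.
rewrite andbT; apply/fsubsetP => t tT; apply: cand_sub.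
by case/tilingP: HT => H _ _; apply: H.
Qed.

Lemma large_fill (R : {fset cell}) (L : seq tile) : uniq L -> (forall t : tile, t \in L -> t.1) ->
  #|` [fset t in fill R L | is_large t]| = size L.
Proof.
move=> uL HL.
have -> : [fset t in fill R L | is_large t] = [fset t in L].
  apply/fsetP => -[b c]; move: (mem_fill R L b c); rewrite !inE /= => ->.
  case: b => /=; first by case: ((true, c) \in L).
  case E: ((false, c) \in L); first by have := HL _ E.
  by case: (c \in R); case: (covered L c).
by rewrite card_fseq undup_id.
Qed.

End PB.
Import PB.

Module PR.
Local Open Scope ring_scope.
Local Open Scope fset_scope.
Set Implicit Arguments. Unset Strict Implicit. Unset Printing Implicit Defensive.

Definition Up (i : nat) : tile := (true, ((i%:Z : int), (0 : int), true)).
Definition Dn (i : nat) : tile := (true, (((i%:Z - 1)%R : int), (0 : int), false)).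
Definition Rg (p : bool) (n : nat) : {fset cell} := if p then P_region n else H_region n.

Definition inH (n : nat) (c : cell) : bool :=
  let: (x, y, o) := c in
  if o then ((y == 0) && (0 <= x) && (x < n%:Z)) || ((y == 1) && (0 <= x) && (x < n%:Z - 1))
  else ((y == 0) && (0 <= x) && (x < n%:Z - 1)) || ((y == 1) && (-1 <= x) && (x < n%:Z - 1)).

Definition inR (p : bool) (n : nat) (c : cell) : bool :=
  inH n c && ~~ (p && (c == ((n%:Z - 1)%R, 0, true))).

Lemma imfset_iotaP (f : nat -> cell) m c :
  reflect (exists2 i, (i < m)%N & c = f i) (c \in [fset f i | i in iota 0 m]).
Proof.
apply: (iffP idP).
  by case/imfsetP => i /= Hi ->; exists i => //; move: Hi; rewrite mem_iota add0n.
by case=> i Hi ->; apply/imfsetP; exists i => //=; rewrite mem_iota add0n.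
Qed.

Lemma memH n c : (c \in H_region n) = inH n c.
Proof.
case: c => [[x y] o]; rewrite /H_region !inE.
apply/idP/idP.
  case/orP => [/orP [/orP [|]|]|] /imfset_iotaP [i Hi [-> -> ->]] /=; lia.
case: o => /= /orP [] /andP [/andP [/eqP -> h1] h2].
- do 3 (apply/orP; left); apply/imfset_iotaP; exists (absz x); first lia; repeat f_equal; lia.
- apply/orP; right; apply/imfset_iotaP; exists (absz x); first lia; repeat f_equal; lia.
- do 2 (apply/orP; left); apply/orP; right; apply/imfset_iotaP; exists (absz x); first lia; repeat f_equal; lia.
- apply/orP; left; apply/orP; right; apply/imfset_iotaP; exists (absz (x + 1)%R); first lia; repeat f_equal; lia.
Qed.

Lemma memR p n c : (c \in Rg p n) = inR p n c.
Proof.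
rewrite /Rg /inR; case: p; last by rewrite memH andbT.
by rewrite /P_region in_fsetD1 memH andbC.
Qed.

Lemma cellsUE (a b : int) : tile_cells (true, (a, b, true)) =
  [fset (a, b, true); ((a + 1)%R, b, true); (a, (b + 1)%R, true); (a, b, false)].
Proof. by []. Qed.
Lemma cellsDE (a b : int) : tile_cells (true, (a, b, false)) =
  [fset ((a + 1)%R, b, false); (a, (b + 1)%R, false); ((a + 1)%R, (b + 1)%R, false);
            ((a + 1)%R, (b + 1)%R, true)].
Proof. by []. Qed.

Lemma in4 (T : choiceType) (x a b c d : T) :
  (x \in [fset a; b; c; d]) = [|| x == a, x == b, x == c | x == d].
Proof. by rewrite !inE !orbA. Qed.

Ltac cell4 := case/or4P => /eqP ->.

Lemma large_in p n (t : tile) : t.1 -> tile_cells t `<=` Rg p n ->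
  exists i, (i.+1 < n)%N /\ ((t = Up i /\ ~~ (p && (i.+2 == n))) \/ t = Dn i).
Proof.
case: t => [[] [[a b] []]] // _ /fsubsetP H.
- have h1 : inR p n (a, b, true) by rewrite -memR; apply: H; rewrite cellsUE in4 eqxx.
  have h2 : inR p n ((a + 1)%R, b, true) by rewrite -memR; apply: H; rewrite cellsUE in4 eqxx ?orbT.
  have h3 : inR p n (a, (b + 1)%R, true) by rewrite -memR; apply: H; rewrite cellsUE in4 eqxx ?orbT.
  have h4 : inR p n (a, b, false) by rewrite -memR; apply: H; rewrite cellsUE in4 eqxx ?orbT.
  clear H; move: h1 h2 h3 h4; rewrite /inR /inH !xpair_eqE /= => h1 h2 h3 h4.
  exists (absz a); split; first lia.
  left; split; last by case: p h1 h2 h3 h4 => /=; lia.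
  rewrite /Up; repeat f_equal; lia.
- have h1 : inR p n ((a + 1)%R, b, false) by rewrite -memR; apply: H; rewrite cellsDE in4 eqxx.
  have h2 : inR p n (a, (b + 1)%R, false) by rewrite -memR; apply: H; rewrite cellsDE in4 eqxx ?orbT.
  have h3 : inR p n ((a + 1)%R, (b + 1)%R, false) by rewrite -memR; apply: H; rewrite cellsDE in4 eqxx ?orbT.
  have h4 : inR p n ((a + 1)%R, (b + 1)%R, true) by rewrite -memR; apply: H; rewrite cellsDE in4 eqxx ?orbT.
  clear H; move: h1 h2 h3 h4; rewrite /inR /inH !xpair_eqE /= => h1 h2 h3 h4.
  exists (absz (a + 1)%R); split; first lia.
  right; rewrite /Dn; repeat f_equal; lia.
Qed.

Lemma Up_sub p n i : (i.+1 < n)%N -> ~~ (p && (i.+2 == n)) -> tile_cells (Up i) `<=` Rg p n.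
Proof.
move=> h1 h2; apply/fsubsetP => c; rewrite cellsUE in4.
cell4; rewrite memR /inR /inH !xpair_eqE /=; case: p h2 => /=; lia.
Qed.

Lemma Dn_sub p n i : (i.+1 < n)%N -> tile_cells (Dn i) `<=` Rg p n.
Proof.
move=> h1; apply/fsubsetP => c; rewrite cellsDE in4.
cell4; rewrite memR /inR /inH !xpair_eqE /=; case: p => /=; lia.
Qed.

Lemma disj_UU i j : i != j -> i != j.+1 -> j != i.+1 ->
  [disjoint tile_cells (Up i) & tile_cells (Up j)].
Proof.
move=> h1 h2 h3; apply/fdisjointP => c; rewrite !cellsUE !in4.
cell4; rewrite !xpair_eqE /=; lia.
Qed.

Lemma disj_DD i j : i != j -> i != j.+1 -> j != i.+1 ->
  [disjoint tile_cells (Dn i) & tile_cells (Dn j)].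
Proof.
move=> h1 h2 h3; apply/fdisjointP => c; rewrite !cellsDE !in4.
cell4; rewrite !xpair_eqE /=; lia.
Qed.

Lemma disj_UD i j : i != j -> [disjoint tile_cells (Up i) & tile_cells (Dn j)].
Proof.
move=> h1; apply/fdisjointP => c; rewrite cellsUE cellsDE !in4.
cell4; rewrite !xpair_eqE /=; lia.
Qed.

Lemma disj_DU i j : i != j -> [disjoint tile_cells (Dn i) & tile_cells (Up j)].
Proof.
move=> h1; apply/fdisjointP => c; rewrite cellsUE cellsDE !in4.
cell4; rewrite !xpair_eqE /=; lia.
Qed.

Lemma share_UU i : exists c, (c \in tile_cells (Up i)) && (c \in tile_cells (Up i.+1)).
Proof. exists ((i.+1)%:Z, 0, true); rewrite !cellsUE !in4 !xpair_eqE /=; lia. Qed.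
Lemma share_DD i : exists c, (c \in tile_cells (Dn i)) && (c \in tile_cells (Dn i.+1)).
Proof. exists (i%:Z, 1, false); rewrite !cellsDE !in4 !xpair_eqE /=; lia. Qed.
Lemma share_UD i : exists c, (c \in tile_cells (Up i)) && (c \in tile_cells (Dn i)).
Proof. exists (i%:Z, 0, false); rewrite cellsUE cellsDE !in4 !xpair_eqE /=; lia. Qed.

Lemma Up_inj : injective Up.
Proof. move=> i j [] /eqP; lia. Qed.
Lemma Dn_inj : injective Dn.
Proof. move=> i j [] /eqP; lia. Qed.
Lemma Up_Dn i j : Up i != Dn j.
Proof. by rewrite /Up /Dn !xpair_eqE /= andbF. Qed.

End PR.
Import PR.

Module PM.
Local Open Scope fset_scope.
Set Implicit Arguments. Unset Strict Implicit. Unset Printing Implicit Defensive.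

Definition Lseq (s : seq st) : seq tile :=
  [seq Up i | i <- iota 0 (size s) & (nth d0 s i).1] ++
  [seq Dn i | i <- iota 0 (size s) & (nth d0 s i).2].

Lemma mem_Lseq_Up s i : (Up i \in Lseq s) = (i < size s)%N && (nth d0 s i).1.
Proof.
rewrite mem_cat mem_map; last exact: Up_inj.
rewrite mem_filter mem_iota add0n /= andbC.
case: (_ && _) => //=; apply/negP => /mapP [j _ E].
by move: (Up_Dn i j); rewrite E eqxx.
Qed.

Lemma mem_Lseq_Dn s i : (Dn i \in Lseq s) = (i < size s)%N && (nth d0 s i).2.
Proof.
rewrite mem_cat (mem_map Dn_inj) mem_filter mem_iota add0n /= andbC.
case: (_ && _); rewrite ?orbT //= orbF; apply/negP => /mapP [j _ E].
by move: (Up_Dn j i); rewrite -E eqxx.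
Qed.

Lemma mem_LseqP s t : t \in Lseq s ->
  (exists i, [/\ t = Up i, (i < size s)%N & (nth d0 s i).1]) \/
  (exists i, [/\ t = Dn i, (i < size s)%N & (nth d0 s i).2]).
Proof.
rewrite mem_cat => /orP [] /mapP [i]; rewrite mem_filter mem_iota add0n /= => /andP [h1 h2] ->.
  by left; exists i.
by right; exists i.
Qed.

Lemma Lseq_large s (t : tile) : t \in Lseq s -> t.1.
Proof. by case/mem_LseqP => -[i [-> _ _]]. Qed.

Lemma uniq_Lseq s : uniq (Lseq s).
Proof.
rewrite cat_uniq (map_inj_uniq Up_inj) (map_inj_uniq Dn_inj) !filter_uniq ?iota_uniq //=.
rewrite andbT; apply/hasPn => t /mapP [j _ ->]; apply/mapP => -[k _ E].
by move: (Up_Dn k j); rewrite E eqxx.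
Qed.

Lemma sum_count (T : Type) (s : seq T) (a : pred T) : \sum_(x <- s) (a x : nat) = count a s.
Proof. by rewrite -sum1_count [RHS]big_mkcond; apply: eq_bigr => x _; case: (a x). Qed.

Lemma count_nthE (s : seq st) (a : pred st) :
  count a s = count (fun i => a (nth d0 s i)) (iota 0 (size s)).
Proof. by rewrite -{1}(mkseq_nth d0 s) /mkseq count_map. Qed.

Lemma size_Lseq s : size (Lseq s) = ntrue s.
Proof.
rewrite size_cat !size_map !size_filter /ntrue big_split /= !sum_count.
by rewrite (count_nthE s (fun x => x.1)) (count_nthE s (fun x => x.2)).
Qed.

Definition code (n : nat) (T : {fset tile}) : seq st :=
  [seq (Up i \in T, Dn i \in T) | i <- iota 0 n.-1].

Lemma size_code n T : size (code n T) = n.-1.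
Proof. by rewrite size_map size_iota. Qed.

Lemma nth_code n T i : (i < n.-1)%N -> nth d0 (code n T) i = (Up i \in T, Dn i \in T).
Proof. by move=> h; rewrite (nth_map 0%N) ?size_iota // nth_iota. Qed.

Definition Vp (p : bool) (n : nat) : seq (seq st) :=
  if p then filter plast (vcodes n.-1) else vcodes n.-1.

Lemma mem_Vp p n s : (s \in Vp p n) = [&& size s == n.-1, path okst d0 s & (p ==> plast s)].
Proof. by rewrite /Vp; case: p; rewrite ?mem_filter mem_vcodes ?andbT // andbC andbA. Qed.

Lemma uniq_Vp p n : uniq (Vp p n).
Proof. by rewrite /Vp; case: p; rewrite ?filter_uniq // uniq_vcodes. Qed.

Definition dec (p : bool) (n : nat) (s : seq st) : {fset tile} := fill (Rg p n) (Lseq s).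

Lemma mem_fill_large R L (t : tile) : t.1 -> (t \in fill R L) = (t \in L).
Proof. by case: t => b c /= hb; rewrite mem_fill hb /=; case: (_ \in L). Qed.

Lemma code_dec p n s : size s = n.-1 -> code n (dec p n s) = s.
Proof.
move=> hs; apply: (eq_from_nth (x0 := d0)); first by rewrite size_code hs.
move=> i; rewrite size_code => hi; rewrite nth_code //.
rewrite /dec !mem_fill_large // mem_Lseq_Up mem_Lseq_Dn hs hi /=.
by case: (nth d0 s i).
Qed.

Lemma path_at s : path okst d0 s ->
  forall i, (i < size s)%N -> okst (nth d0 (d0 :: s) i) (nth d0 s i).
Proof. by move/(pathP d0). Qed.

Lemma dec_tiling p n s : s \in Vp p n -> is_tiling (Rg p n) (dec p n s).
Proof.
rewrite mem_Vp => /and3P [/eqP hs hp hl].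
have ok := path_at hp.
apply: fill_tiling.
- exact: Lseq_large.
- move=> t /mem_LseqP [] [i [-> hi h1]].
    apply: Up_sub; first by move: hi; rewrite hs; lia.
    apply/negP => /andP [pp /eqP hn]; move: hl; rewrite pp /= /plast -nth_last hs.
    have -> : (n.-1).-1 = i by lia.
    by rewrite h1.
  by apply: (Dn_sub p); move: hi; rewrite hs; lia.
- move=> t1 t2 /mem_LseqP [] [i [-> hi h1]] /mem_LseqP [] [j [-> hj h2]] ne.
  + have nij : i != j by apply: contra ne => /eqP ->.
    apply: disj_UU => //.
      apply/eqP => E; subst i; have := ok j.+1; rewrite /= hi => /(_ isT).
      by rewrite /okst h1 h2 /= andbF.
    apply/eqP => E; subst j; have := ok i.+1; rewrite /= hj => /(_ isT).
    by rewrite /okst h1 h2 /= andbF.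
  + apply: disj_UD; apply/eqP => E; subst j; have := ok i hi.
    by rewrite /okst h1 h2.
  + apply: disj_DU; apply/eqP => E; subst j; have := ok i hi.
    by rewrite /okst h1 h2.
  + have nij : i != j by apply: contra ne => /eqP ->.
    apply: disj_DD => //.
      apply/eqP => E; subst i; have := ok j.+1; rewrite /= hi => /(_ isT).
      by rewrite /okst h1 h2 /= !andbF.
    apply/eqP => E; subst j; have := ok i.+1; rewrite /= hj => /(_ isT).
    by rewrite /okst h1 h2 /= !andbF.
Qed.

Lemma noUD (R : {fset cell}) T i : is_tiling R T -> ~~ ((Up i \in T) && (Dn i \in T)).
Proof.
move=> HT; apply/negP => /andP [h1 h2]; have [c /andP [c1 c2]] := share_UD i.
exact: (share_false HT h1 h2 (Up_Dn i i) c1 c2).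
Qed.

Lemma noUU (R : {fset cell}) T i : is_tiling R T -> ~~ ((Up i \in T) && (Up i.+1 \in T)).
Proof.
move=> HT; apply/negP => /andP [h1 h2]; have [c /andP [c1 c2]] := share_UU i.
apply: (share_false HT h1 h2 _ c1 c2).
by apply/negP => /eqP /Up_inj; lia.
Qed.

Lemma noDD (R : {fset cell}) T i : is_tiling R T -> ~~ ((Dn i \in T) && (Dn i.+1 \in T)).
Proof.
move=> HT; apply/negP => /andP [h1 h2]; have [c /andP [c1 c2]] := share_DD i.
apply: (share_false HT h1 h2 _ c1 c2).
by apply/negP => /eqP /Dn_inj; lia.
Qed.

Lemma tiling_code p n T : is_tiling (Rg p n) T ->
  code n T \in Vp p n /\ T = dec p n (code n T).
Proof.
move=> HT; have [H1 H2 H3] := tilingP HT; split.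
  rewrite mem_Vp size_code eqxx /=; apply/andP; split.
    apply/(pathP d0) => i; rewrite size_code => hi.
    rewrite nth_code //; case: i hi => [|j] hj /=.
      by rewrite /okst /= (negbTE (noUD 0 HT)).
    rewrite nth_code; last by lia.
    rewrite /okst /= (negbTE (noUD j.+1 HT)) (negbTE (noUU j HT)) (negbTE (noDD j HT)).
    by [].
  case: p H1 HT {H2 H3} => //= H1 HT; rewrite /plast.
  case E: n.-1 => [|m]; first by rewrite /code E.
  rewrite -nth_last size_code E /= nth_code; last by lia.
  apply/negP => /= hU; have := @large_in true n (Up m) isT (H1 _ hU).
  case=> i [hi [[/Up_inj E1 /negP []]|/eqP]].
    by apply/eqP; lia.
  by move=> E1; move: (Up_Dn m i); rewrite E1.
apply: fill_eq => // -[[] c]; last first.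
  by rewrite andbF; apply/negP => /Lseq_large.
rewrite andbT; apply/idP/idP.
  case/mem_LseqP => -[i [E hi h]].
    by move: h; rewrite E nth_code -?(size_code n T).
  by move: h; rewrite E nth_code -?(size_code n T).
move=> tT; have := @large_in p n (true, c) isT (H1 _ tT); case=> i [hi [[E _]|E]];
  rewrite E in tT *.
  by rewrite mem_Lseq_Up size_code nth_code /=; [rewrite tT; lia|lia].
by rewrite mem_Lseq_Dn size_code nth_code /=; [rewrite tT; lia|lia].
Qed.

Lemma tilings_eq p n : tilings (Rg p n) = [fset dec p n s | s in Vp p n].
Proof.
apply/fsetP => T; rewrite mem_tilings; apply/idP/imfsetP.
  by case/tiling_code => h1 h2; exists (code n T).
by case=> s hs ->; apply: dec_tiling.
Qed.

Lemma dec_inj p n : {in Vp p n &, injective (dec p n)}.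
Proof.
move=> s1 s2; rewrite !mem_Vp => /and3P [/eqP h1 _ _] /and3P [/eqP h2 _ _] E.
by rewrite -(code_dec p h1) -(code_dec p h2) E.
Qed.

Lemma perm_Vp p n : perm_eq (enum_finmem (mem (Vp p n))) (Vp p n).
Proof.
apply: uniq_perm; [exact: enum_finmem_uniq | exact: uniq_Vp | exact: enum_finmemE].
Qed.

Lemma num_tilings_eq p n : num_tilings (Rg p n) = size (Vp p n).
Proof.
by rewrite /num_tilings tilings_eq card_in_imfset ?(perm_size (perm_Vp p n)) //; apply: dec_inj.
Qed.

Lemma num_large_eq p n : num_large_total (Rg p n) = \sum_(s <- Vp p n) ntrue s.
Proof.
rewrite /num_large_total tilings_eq big_imfset /=; last exact: dec_inj.
rewrite (perm_big _ (perm_Vp p n)); apply: eq_big_seq => s _.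
by rewrite /dec large_fill ?size_Lseq //; [exact: uniq_Lseq | exact: Lseq_large].
Qed.

End PM.
Import PM.
Local Open Scope ring_scope.

Theorem theorem6 (n : nat) (hn : (1 <= n)%N) :
  (qn n)%:R = (1 / 2 : rat) * n%:R * (Hn n)%:R - (1 / 2 : rat) * (Pn n)%:R /\
  (rn n)%:R = (1 / 2 : rat) * n%:R * (Pn n)%:R - (1 / 2 : rat) * (Pn n)%:R /\
  (1 / 2 : rat) * n%:R * (Pn n)%:R - (1 / 2 : rat) * (Pn n)%:R
    = ((n%:R - 1) / 2 : rat) * (Pn n)%:R.
Proof.
have [E1 E2] := count_identities n.-1.
have eH : Hn n = size (vcodes n.-1) := num_tilings_eq false n.
have eP : Pn n = size (filter plast (vcodes n.-1)) := num_tilings_eq true n.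
have eq : qn n = \sum_(s <- vcodes n.-1) ntrue s := num_large_eq false n.
have er : rn n = \sum_(s <- filter plast (vcodes n.-1)) ntrue s := num_large_eq true n.
rewrite -eH -eP -eq -er prednK // in E1 E2.
have F1 : (2 * (qn n)%:R + (Pn n)%:R = n%:R * (Hn n)%:R :> rat).
  by rewrite -[2]/(2%:R) -!natrM -natrD E1.
have F2 : (2 * (rn n)%:R = (n.-1)%:R * (Pn n)%:R :> rat).
  by rewrite -[2]/(2%:R) -!natrM E2.
have F3 : ((n.-1)%:R = n%:R - 1 :> rat).
  by rewrite -{2}(prednK hn) -addn1 natrD addrK.
rewrite F3 in F2.
split; first lra.
split; lra.
Qed.
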